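(* Let $n,p,q,c,d$ be nonnegative integers. Then \[ \begin{split} &\sum_{k=0}^n \binom{p+k}{p}\binom{q+n-k}{q}\binom{k}{c}\binom{n-k}{d}H_{p+k}H_{q+n-k}\\ &= \binom{n+p+q+1}{n-c-d}\binom{p+c}{c}\binom{q+d}{d} \Bigl[H_{p+q+c+d+1}^{(2)}-H_{n+p+q+1}^{(2)}\\ &\qquad +(H_{n+p+q+1}-H_{p+q+c+d+1}+H_{p+c})(H_{n+p+q+1}-H_{p+q+c+d+1}+H_{q+d})\Bigr]. \end{split} \]
   Context: For a nonnegative integer $N$ and $m\in\{1,2\}$, $H_N^{(m)}=\sum_{j=1}^N \frac{1}{j^m}$ (empty sum $=0$), and $H_N=H_N^{(1)}$. For integers $r$ and $j$, $\binom{r}{j}=\frac{r(r-1)\cdots(r-j+1)}{j!}$ if $j\ge 0$ and $\binom{r}{j}=0$ if $j<0$. *)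

(* Defs.v *)
From mathcomp Require Import all_boot all_order all_algebra.
Set Implicit Arguments. Unset Strict Implicit. Unset Printing Implicit Defensive.
Import Order.TTheory GRing.Theory Num.Theory.
Local Open Scope ring_scope.

Definition harm (m N : nat) : rat := \sum_(1 <= j < N.+1) ((j%:R) ^+ m)^-1.
Definition H (N : nat) : rat := harm 1 N.

Definition binz (r : nat) (j : int) : rat :=
  match j with
  | Posz k => ('C(r, k))%:R
  | Negz _ => 0
  end.

(* Main.v *)
Require Import Defs.
From mathcomp Require Import all_boot all_order all_algebra.
From mathcomp Require Import ring lra zify.
Import Order.TTheory GRing.Theory Num.Theory.

Lemma hockey x m : \sum_(i < m.+1) 'C(x+i,i) = 'C(x+1+m, m).
Proof.
elim: m => [|m IH]; first by rewrite big_ord1 !bin0.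
rewrite big_ord_recr /= IH.
have -> : x + 1 + m.+1 = (x + 1 + m).+1 by lia.
rewrite binS; have -> : x + m.+1 = x + 1 + m by lia.
by rewrite addnC.
Qed.

Lemma vand x y m : \sum_(i < m.+1) 'C(x+i,i) * 'C(y+(m-i), m-i) = 'C(x+y+1+m, m).
Proof.
elim: y m => [|y IHy] m.
  under eq_bigr => i _ do rewrite add0n binn muln1.
  by rewrite hockey addn0.
elim: m => [|m IHm]; first by rewrite big_ord1 !bin0.
rewrite big_ord_recr /= subnn addn0 bin0 muln1.
rewrite (eq_bigr (fun i : 'I_m.+1 => 'C(x+i,i) * 'C(y+(m.+1-i), m.+1-i) + 'C(x+i,i) * 'C(y.+1+(m-i), m-i))); last first.
  move=> i _ /=; rewrite -mulnDr; congr (_ * _).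
  have hi : i <= m by rewrite -ltnS ltn_ord.
  rewrite subSn // -addSnnS addSn binS. congr (_ + _). by rewrite addnS.
rewrite big_split /= IHm -addnA [_ + 'C(x + m.+1, m.+1)]addnC addnA.
have := IHy m.+1; rewrite big_ord_recr /= subnn addn0 bin0 muln1 => ->.
have -> : x + y.+1 + 1 + m.+1 = (x + y + 1 + m.+1).+1 by lia.
rewrite binS; congr (_ + _). congr 'C(_, _); lia.
Qed.

Local Open Scope ring_scope.

Fixpoint Pp (i : nat) : {poly rat} :=
  if i is j.+1 then Pp j * (('X + (j.+1)%:R%:P) * ((j.+1)%:R^-1)%:P) else 1.

Lemma Pp_val (a i : nat) : (Pp i).[a%:R] = ('C(a + i, i))%:R.
Proof.
elim: i => [|i IH] /=; first by rewrite hornerC addn0 bin0.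
rewrite !hornerM hornerD hornerX !hornerC IH.
have h := mul_bin_diag (a + i.+1) i.
rewrite addnS /= in h.
have h' : (('C(a + i, i))%:R * (a + i.+1)%:R : rat) = (i.+1)%:R * ('C((a + i).+1, i.+1))%:R.
  by rewrite -!natrM addnS mulnC h.
rewrite addnS.
have -> : ('C((a+i).+1, i.+1))%:R = ('C(a+i,i))%:R * (a+i.+1)%:R / (i.+1)%:R :> rat.
  by rewrite h' mulrAC divff ?mul1r // pnatr_eq0.
rewrite natrD; ring.
Qed.

Lemma poly_nat_eq (p q : {poly rat}) :
  (forall n : nat, p.[n%:R] = q.[n%:R]) -> p = q.
Proof.
move=> h; apply/eqP; rewrite -subr_eq0; apply/eqP.
apply: (roots_geq_poly_eq0 (rs := [seq i%:R | i <- iota 0 (size (p - q))])).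
- apply/allP => x /mapP [i _ ->]; by rewrite /root hornerD hornerN h subrr.
- by rewrite map_inj_uniq ?iota_uniq // => x y /eqP; rewrite eqr_nat => /eqP.
- by rewrite size_map size_iota.
Qed.


Definition A (i : nat) (z : rat) := \sum_(t < i) (z + (t.+1)%:R)^-1.
Definition B (i : nat) (z : rat) := \sum_(t < i) ((z + (t.+1)%:R) ^+ 2)^-1.

Lemma Pp_d1 i z : 0 <= z -> (Pp i)^`().[z] = (Pp i).[z] * A i z.
Proof.
move=> z0; elim: i => [|i IH]; first by rewrite /= derivC !hornerC /A big_ord0 mulr0.
rewrite /= !derivM derivD derivX !derivC !(hornerM, hornerD, hornerX, hornerC, horner0) IH.
rewrite /A big_ord_recr /=.
have hz : z + (i.+1)%:R != 0 by rewrite lt0r_neq0 // ltr_wpDl.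
set S := \sum_(t < i) _.
field. by rewrite [1 + _]addrC natr1 hz pnatr_eq0.
Qed.

Lemma Pp_d2 i z : 0 <= z -> (Pp i)^`()^`().[z] = (Pp i).[z] * (A i z ^+ 2 - B i z).
Proof.
move=> z0; elim: i => [|i IH]; first by rewrite /= !derivC !hornerC /A /B !big_ord0 mulr0.
rewrite /= !(derivM, derivD, derivX, derivC) !(hornerM, hornerD, hornerX, hornerC, horner0) IH.
rewrite (Pp_d1 _ _ z0) /A /B !big_ord_recr /=.
have hz : z + (i.+1)%:R != 0 by rewrite lt0r_neq0 // ltr_wpDl.
field. by rewrite [1 + _]addrC natr1 hz pnatr_eq0.
Qed.


Lemma lift_deriv (m k : nat) (a : nat -> rat) (F : nat -> {poly rat}) (G : {poly rat}) :
  (forall x : nat, \sum_(i < m.+1) a i * (F i).[x%:R] = G.[x%:R + k%:R]) ->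
  (forall x : nat, \sum_(i < m.+1) a i * (F i)^`().[x%:R] = G^`().[x%:R + k%:R]).
Proof.
move=> h.
have E : \sum_(i < m.+1) (a i)%:P * F i = G \Po ('X + (k%:R)%:P).
  apply: poly_nat_eq => n.
  rewrite horner_comp hornerD hornerX hornerC -h horner_sum.
  by apply: eq_bigr => i _; rewrite hornerM hornerC.
move=> x.
have := congr1 (fun p => (deriv p).[x%:R]) E => /=.
rewrite deriv_comp derivD derivX derivC addr0 mulr1 horner_comp hornerD hornerX hornerC.
move=> <-.
rewrite raddf_sum horner_sum; apply: eq_bigr => i _.
by rewrite /= deriv_mulC hornerM hornerC.
Qed.

Lemma V0 x y m : \sum_(i < m.+1) (Pp i).[x%:R] * (Pp (m-i)).[y%:R] = (Pp m).[(x+y+1)%:R].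
Proof.
rewrite Pp_val -(vand x y m) natr_sum; apply: eq_bigr => i _.
by rewrite !Pp_val natrM.
Qed.

Lemma V1 x y m : \sum_(i < m.+1) (Pp i)^`().[x%:R] * (Pp (m-i)).[y%:R] = (Pp m)^`().[(x+y+1)%:R].
Proof.
rewrite (_ : (x + y + 1 = x + y.+1)%N); last by lia.
rewrite natrD -(@lift_deriv m y.+1 (fun i => (Pp (m-i)).[y%:R]) Pp (Pp m)).
  by apply: eq_bigr => i _; rewrite mulrC.
move=> x'; rewrite -natrD (_ : (x' + y.+1 = x' + y + 1)%N); last by lia.
rewrite -V0.
by apply: eq_bigr => i _; rewrite mulrC.
Qed.

Lemma V2 x y m : \sum_(i < m.+1) (Pp i).[x%:R] * (Pp (m-i))^`().[y%:R] = (Pp m)^`().[(x+y+1)%:R].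
Proof.
rewrite (_ : (x + y + 1 = y + x.+1)%N); last by lia.
rewrite natrD -(@lift_deriv m x.+1 (fun i => (Pp i).[x%:R]) (fun i => Pp (m - i)) (Pp m)) //.
move=> y'; rewrite -natrD (_ : (y' + x.+1 = x + y' + 1)%N); last by lia.
by rewrite -V0.
Qed.

Lemma V3 x y m : \sum_(i < m.+1) (Pp i)^`().[x%:R] * (Pp (m-i))^`().[y%:R] = (Pp m)^`()^`().[(x+y+1)%:R].
Proof.
rewrite (_ : (x + y + 1 = y + x.+1)%N); last by lia.
rewrite natrD -(@lift_deriv m x.+1 (fun i => (Pp i)^`().[x%:R]) (fun i => Pp (m - i)) (Pp m)^`()) //.
move=> y'; rewrite -natrD (_ : (y' + x.+1 = x + y' + 1)%N); last by lia.
by rewrite -V1.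
Qed.


Lemma harm_shift k a i : harm k (a + i) = harm k a + \sum_(t < i) ((a%:R + (t.+1)%:R) ^+ k)^-1.
Proof.
elim: i => [|i IH]; first by rewrite addn0 big_ord0 addr0.
rewrite addnS /harm big_nat_recr //= -/(harm k (a + i)) IH big_ord_recr /=.
by rewrite -addrA -natrD addnS.
Qed.

Lemma H_shift a i : H (a + i) = H a + A i a%:R.
Proof. by rewrite /H harm_shift /A; congr (_ + _); apply: eq_bigr => t _; rewrite expr1. Qed.

Lemma H2_shift a i : harm 2 (a + i) = harm 2 a + B i a%:R.
Proof. by rewrite harm_shift. Qed.

Lemma core a b m :
  \sum_(i < m.+1) (('C(a+i,i))%:R * H (a+i)) * (('C(b+(m-i), m-i))%:R * H (b+(m-i)))
  = ('C(a+b+1+m, m))%:R * (harm 2 (a+b+1) - harm 2 (a+b+1+m)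
      + (H (a+b+1+m) - H (a+b+1) + H a) * (H (a+b+1+m) - H (a+b+1) + H b)).
Proof.
have z0 : forall n : nat, 0 <= n%:R :> rat by move=> n; rewrite ler0n.
rewrite (eq_bigr (fun i : 'I_m.+1 =>
   H a * H b * ((Pp i).[a%:R] * (Pp (m-i)).[b%:R])
 + H a * ((Pp i).[a%:R] * (Pp (m-i))^`().[b%:R])
 + H b * ((Pp i)^`().[a%:R] * (Pp (m-i)).[b%:R])
 + (Pp i)^`().[a%:R] * (Pp (m-i))^`().[b%:R])); last first.
  move=> i _; rewrite !H_shift -!Pp_val !Pp_d1 //; ring.
rewrite !big_split /= -!mulr_sumr V0 V1 V2 V3.
rewrite -Pp_val Pp_d2 // Pp_d1 // !H_shift !H2_shift.
ring.
Qed.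


Lemma fact_neq0 n : (n`!)%:R != 0 :> rat.
Proof. by rewrite pnatr_eq0 -lt0n fact_gt0. Qed.

Lemma binR n k : (k <= n)%N -> ('C(n,k))%:R = (n`!)%:R / ((k`!)%:R * ((n-k)`!)%:R) :> rat.
Proof.
move=> h; rewrite -(bin_fact h) !natrM mulfK // mulf_neq0 // ?fact_neq0 // -natrM fact_neq0.
Qed.

Lemma binmulR p c i :
  ('C(p+c+i,p))%:R * ('C(c+i,c))%:R = ('C(p+c,c))%:R * ('C(p+c+i,i))%:R :> rat.
Proof.
rewrite !binR; try lia.
rewrite (_ : (p + c + i - p = c + i)%N); last by lia.
rewrite (_ : (c + i - c = i)%N); last by lia.
rewrite (_ : (p + c - c = p)%N); last by lia.
rewrite (_ : (p + c + i - i = p + c)%N); last by lia.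
have := fact_neq0 p; have := fact_neq0 c; have := fact_neq0 i;
have := fact_neq0 (c+i); have := fact_neq0 (p+c).
move=> *; field.
by rewrite !fact_neq0.
Qed.


Theorem mainTheorem5 (n p q c d : nat) :
  \sum_(0 <= k < n.+1)
     ('C(p + k, p))%:R * ('C(q + (n - k), q))%:R * ('C(k, c))%:R * ('C(n - k, d))%:R
       * H (p + k) * H (q + (n - k))
  = binz (n + p + q + 1) (n%:Z - c%:Z - d%:Z) * ('C(p + c, c))%:R * ('C(q + d, d))%:R
    * (harm 2 (p + q + c + d + 1) - harm 2 (n + p + q + 1)
       + (H (n + p + q + 1) - H (p + q + c + d + 1) + H (p + c))
         * (H (n + p + q + 1) - H (p + q + c + d + 1) + H (q + d))).
Proof.
have Z : forall k, (k < c)%N || (n - k < d)%N ->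
   ('C(p + k, p))%:R * ('C(q + (n - k), q))%:R * ('C(k, c))%:R * ('C(n - k, d))%:R
       * H (p + k) * H (q + (n - k)) = 0 :> rat.
  move=> k /orP [hk|hk]; first by rewrite (bin_small hk) mulr0n !(mulr0, mul0r).
  by rewrite (bin_small hk) mulr0n !(mulr0, mul0r).
have [hle|hlt] := leqP (c + d) n; last first.
  rewrite big_nat_cond big1; last first.
    move=> k /andP[/andP[_ hk] _]; apply: Z.
    have [hkc|hkc] := ltnP k c; first by [].
    apply/orP; right; lia.
  have -> : binz (n + p + q + 1) (n%:Z - c%:Z - d%:Z) = 0.
    case E: (n%:Z - c%:Z - d%:Z) => [l|l] //; exfalso; lia.
  by rewrite !mul0r.
have [m Em] : exists m, n = (c + d + m)%N by exists (n - (c + d))%N; lia.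
have -> : n%:Z - c%:Z - d%:Z = Posz m by rewrite Em; lia.
rewrite /binz.
rewrite (big_cat_nat _ (n := c)) //=; last by lia.
rewrite big_nat_cond big1 ?add0r; last first.
  by move=> k /andP[/andP[_ hk] _]; apply: Z; rewrite hk.
rewrite (big_cat_nat _ (n := (c + m.+1)%N)) //=; try lia.
rewrite [X in _ + X]big_nat_cond [X in _ + X]big1 ?addr0; last first.
  move=> k /andP[/andP[hk1 hk2] _]; apply: Z; apply/orP; right; lia.
rewrite -{1}[c]add0n big_addn addKn big_mkord.
rewrite (_ : (n + p + q + 1 = p + c + (q + d) + 1 + m)%N); last by lia.
rewrite (_ : (p + q + c + d + 1 = p + c + (q + d) + 1)%N); last by lia.
have rearr : forall x y z w : rat, x*y*z*w = y*z*(x*w) by move=> *; ring.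
rewrite rearr -(core (p + c) (q + d) m).
rewrite mulr_sumr; apply: eq_bigr => i _.
have hi : (i <= m)%N by rewrite -ltnS ltn_ord.
rewrite (_ : (n - (i + c) = d + (m - i))%N); last by lia.
rewrite (_ : (p + (i + c) = p + c + i)%N); last by lia.
rewrite (_ : (i + c = c + i)%N); last by lia.
rewrite (_ : (q + (d + (m - i)) = q + d + (m - i))%N); last by lia.
have E1 := binmulR p c i.
have E2 := binmulR q d (m - i).
transitivity (('C(p+c+i,p))%:R * ('C(c+i,c))%:R * (('C(q+d+(m-i),q))%:R * ('C(d+(m-i),d))%:R)
   * H (p + c + i) * H (q + d + (m - i))); first ring.
rewrite E1 E2.
ring.
Qed.
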